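(* Let $d_{CC}$ be the CC metric on $H(\mathbb{R})$ induced by the $\ell^1$ norm on $\mathbb{R}^2$, and $|\cdot|_{\sf std}$ the word length on $H(\mathbb{Z})$ with respect to ${\sf std}=\{\pm{\sf e}_1,\pm{\sf e}_2\}$. Fix $(x,y)\in\mathbb{Z}^2$. For $z\ge0$ with $z\in\mathbb{Z}+\epsilon(x,y)$, let $n$ be the unique integer with the same parity as $x+y$ such that $n-2<d_{CC}((x,y,z),{\sf 0})\le n$. Then $|(x,y,z)|_{\sf std}=n$.
   Context: Exponential coordinates on $H(\mathbb{R})$: $(x,y,z)(x',y',z')=(x+x',y+y',z+z'+\tfrac12(xy'-yx'))$, ${\sf 0}=(0,0,0)$. $H(\mathbb{Z})=\{(x,y,z):x,y\in\mathbb{Z},z\in\mathbb{Z}+\epsilon(x,y)\}$ with $\epsilon(x,y)=1/2$ if $x,y$ both odd and $0$ otherwise; ${\sf e}_1=(1,0,0)$, ${\sf e}_2=(0,1,0)$. The CC metric: $d_{CC}({\sf p},{\sf q})$ is the infimum over admissible curves ($\gamma_3'=\tfrac12(\gamma_1\gamma_2'-\gamma_2\gamma_1')$) from ${\sf p}$ to ${\sf q}$ of the $\ell^1$-length of their projection to the $(x,y)$-plane. *)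

(* Defs.v *)
From Stdlib Require Import Reals ZArith List.
From Coquelicot Require Import Coquelicot.
Open Scope R_scope.

(* Points of H(R) in exponential coordinates (x,y,z). *)
Record H := mkH { hx : R; hy : R; hz : R }.

Definition hmul (p q : H) : H :=
  mkH (hx p + hx q) (hy p + hy q)
      (hz p + hz q + / 2 * (hx p * hy q - hy p * hx q)).

Definition hid : H := mkH 0 0 0.

Definition eps (x y : Z) : R :=
  if (Z.odd x && Z.odd y)%bool then / 2 else 0.

Definition in_HZ (p : H) : Prop :=
  exists (x y k : Z), p = mkH (IZR x) (IZR y) (IZR k + eps x y).

Definition e1 : H := mkH 1 0 0.
Definition e2 : H := mkH 0 1 0.

Definition std (g : H) : Prop :=
  g = e1 \/ g = mkH (-1) 0 0 \/ g = e2 \/ g = mkH 0 (-1) 0.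

Definition word_prod (w : list H) : H := fold_right hmul hid w.

Definition word_length_is (g : H) (n : Z) : Prop :=
  (exists w, List.Forall std w /\ word_prod w = g /\ Z.of_nat (length w) = n) /\
  (forall w, List.Forall std w -> word_prod w = g -> (n <= Z.of_nat (length w))%Z).

Definition admissible (g1 g2 g3 d1 d2 : R -> R) : Prop :=
  forall t, 0 <= t <= 1 ->
    is_derive g1 t (d1 t) /\ is_derive g2 t (d2 t) /\
    continuous d1 t /\ continuous d2 t /\
    is_derive g3 t (/ 2 * (g1 t * d2 t - g2 t * d1 t)).

Definition cc_length (p q : H) (L : R) : Prop :=
  exists g1 g2 g3 d1 d2 : R -> R,
    admissible g1 g2 g3 d1 d2 /\
    mkH (g1 0) (g2 0) (g3 0) = p /\ mkH (g1 1) (g2 1) (g3 1) = q /\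
    L = RInt (fun t => Rabs (d1 t) + Rabs (d2 t)) 0 1.

Definition dCC (p q : H) : Rbar := Glb_Rbar (cc_length p q).

(* Main.v *)
Require Import Defs.
From Stdlib Require Import Reals Lra Lia Psatz ZArith List Classical.
From Coquelicot Require Import Coquelicot.
Open Scope R_scope.

Lemma is_derive_eq (f : R -> R) x l l' : is_derive f x l -> l = l' -> is_derive f x l'.
Proof. intros H ->; exact H. Qed.

Definition sqa (u : R) := u * Rabs u.

Lemma q_deriv u : is_derive sqa u (2 * Rabs u).
Proof.
  destruct (Req_dec u 0) as [->|Hu].
  - apply is_derive_Reals. intros eps Heps. exists (mkposreal eps Heps).
    intros h Hh0 Hh. simpl in Hh. unfold sqa.
    rewrite Rabs_R0, Rmult_0_l, Rplus_0_l, Rmult_0_r, Rminus_0_r.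
    replace ((h * Rabs h - 0) / h) with (Rabs h) by (field; auto).
    rewrite Rabs_Rabsolu; auto.
  - unfold sqa. eapply is_derive_eq.
    apply (is_derive_mult (fun u => u) (fun u => Rabs u)).
    apply is_derive_id.
    apply (is_derive_Rabs (fun u => u)); auto. apply is_derive_id.
    intros; apply Rmult_comm.
    simpl. unfold plus, mult, one; simpl.
    unfold sign. destruct (total_order_T 0 u) as [[H|H]|H].
    + rewrite Rabs_pos_eq; lra.
    + lra.
    + rewrite Rabs_left; lra.
Qed.

Lemma q_shift_deriv c u : is_derive (fun s => sqa (s - c)) u (2 * Rabs (u - c)).
Proof.
  eapply is_derive_eq.
  apply (is_derive_comp sqa (fun s => s - c)). apply q_deriv.
  apply @is_derive_minus. apply is_derive_id. apply is_derive_const.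
  unfold scal, minus, plus, opp, zero, one; simpl. unfold mult; simpl. ring.
Qed.

Definition phi (s : R) := sqa s + sqa (s - 1) - 2 * sqa (s - /2) + /2.
Definition dphi (s : R) := 2 * Rabs s + 2 * Rabs (s - 1) - 4 * Rabs (s - /2).

Lemma phi_deriv s : is_derive phi s (dphi s).
Proof.
  unfold phi, dphi.
  eapply is_derive_eq.
  apply @is_derive_plus. apply @is_derive_minus. apply @is_derive_plus.
  apply q_deriv. apply q_shift_deriv.
  apply @is_derive_scal. apply q_shift_deriv. apply is_derive_const.
  unfold plus, minus, opp, zero, scal; simpl. unfold plus, mult, opp; simpl. ring.
Qed.

Lemma dphi_cont s : continuous dphi s.
Proof.
  unfold dphi.
  apply @continuous_minus. apply @continuous_plus.
  apply @continuous_scal_r. apply continuous_Rabs.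
  apply @continuous_scal_r. apply continuous_Rabs_comp.
  apply @continuous_minus. apply continuous_id. apply continuous_const.
  apply @continuous_scal_r. apply continuous_Rabs_comp.
  apply @continuous_minus. apply continuous_id. apply continuous_const.
Qed.

Lemma dphi_nonneg s : 0 <= dphi s.
Proof. unfold dphi. unfold Rabs; repeat destruct Rcase_abs; lra. Qed.

Lemma dphi_out s : s <= 0 \/ 1 <= s -> dphi s = 0.
Proof. unfold dphi. unfold Rabs; repeat destruct Rcase_abs; lra. Qed.

Lemma phi_low s : s <= 0 -> phi s = 0.
Proof. unfold phi, sqa. intros. unfold Rabs; repeat destruct Rcase_abs; nra. Qed.

Lemma phi_high s : 1 <= s -> phi s = 1.
Proof. unfold phi, sqa. intros. unfold Rabs; repeat destruct Rcase_abs; nra. Qed.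

Definition good (p p' : H) (L : R) : Prop := exists g1 g2 g3 d1 d2 : R -> R,
 (forall t, is_derive g1 t (d1 t) /\ is_derive g2 t (d2 t) /\ continuous d1 t /\
    continuous d2 t /\ is_derive g3 t (/2 * (g1 t * d2 t - g2 t * d1 t))) /\
 (forall t, t <= 0 -> d1 t = 0 /\ d2 t = 0 /\ g1 t = g1 0 /\ g2 t = g2 0 /\ g3 t = g3 0) /\
 (forall t, 1 <= t -> d1 t = 0 /\ d2 t = 0 /\ g1 t = g1 1 /\ g2 t = g2 1 /\ g3 t = g3 1) /\
 mkH (g1 0) (g2 0) (g3 0) = p /\ mkH (g1 1) (g2 1) (g3 1) = p' /\
 is_RInt (fun t => Rabs (d1 t) + Rabs (d2 t)) 0 1 L.

Lemma good_cc p p' L : good p p' L -> cc_length p p' L.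
Proof.
  intros (g1 & g2 & g3 & d1 & d2 & Hd & _ & _ & H0 & H1 & HI).
  exists g1, g2, g3, d1, d2. split; [|split; [|split]]; auto.
  - intros t _. apply Hd.
  - symmetry. apply is_RInt_unique. exact HI.
Qed.

Lemma is_RInt_zero a b : is_RInt (fun _ : R => 0) a b 0.
Proof.
  pose proof (is_RInt_const a b 0) as Hc.
  unfold scal in Hc; simpl in Hc. unfold mult in Hc; simpl in Hc.
  rewrite Rmult_0_r in Hc. exact Hc.
Qed.

Lemma is_derive_cst (c t : R) : is_derive (fun _ : R => c) t 0.
Proof. exact (is_derive_const c t). Qed.

Lemma good_const p : good p p 0.
Proof.
  destruct p as [a b c].
  exists (fun _ => a), (fun _ => b), (fun _ => c), (fun _ => 0), (fun _ => 0).
  split; [|split; [|split; [|split; [|split]]]]; auto.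
  - intros t. split; [apply is_derive_cst|split; [apply is_derive_cst|]].
    split; [apply continuous_const|split; [apply continuous_const|]].
    eapply is_derive_eq. apply is_derive_cst. simpl. ring.
  - intros; repeat split; auto.
  - intros; repeat split; auto.
  - eapply is_RInt_ext; [|apply is_RInt_zero]. intros; simpl. rewrite Rabs_R0; ring.
Qed.

Lemma dphi_int : is_RInt dphi 0 1 1.
Proof.
  pose proof (is_RInt_derive phi dphi 0 1 (fun x _ => phi_deriv x) (fun x _ => dphi_cont x)) as HH.
  rewrite phi_high, phi_low in HH by lra. unfold minus, plus, opp in HH; simpl in HH.
  replace (1 + - 0) with 1 in HH by ring. exact HH.
Qed.

Lemma seg_deriv s t : is_derive (fun t => s * (1 - phi t)) t (- (s * dphi t)).
Proof.
  eapply is_derive_eq.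
  apply @is_derive_scal. apply @is_derive_minus. apply is_derive_cst. apply phi_deriv.
  unfold scal, minus, plus, opp, zero; simpl. unfold mult, plus, opp; simpl. ring.
Qed.

Lemma seg_cont s t : continuous (fun t => - (s * dphi t)) t.
Proof.
  apply @continuous_opp. apply @continuous_scal_r. apply dphi_cont.
Qed.

Lemma good_seg s1 s2 : good (mkH s1 s2 0) hid (Rabs s1 + Rabs s2).
Proof.
  exists (fun t => s1 * (1 - phi t)), (fun t => s2 * (1 - phi t)), (fun _ => 0),
    (fun t => - (s1 * dphi t)), (fun t => - (s2 * dphi t)).
  split; [|split; [|split; [|split; [|split]]]].
  - intros t0. split; [apply seg_deriv|split; [apply seg_deriv|split; [apply seg_cont|split; [apply seg_cont|]]]].
    eapply is_derive_eq. apply is_derive_cst. simpl. ring.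
  - intros t0 Ht. rewrite !phi_low, dphi_out by lra. repeat split; ring.
  - intros t0 Ht. rewrite !(phi_high t0), (phi_high 1), dphi_out by lra. repeat split; ring.
  - rewrite phi_low by lra. f_equal; ring.
  - rewrite phi_high by lra. unfold hid. f_equal; ring.
  - eapply is_RInt_ext.
    2:{ pose proof (is_RInt_scal _ _ _ (Rabs s1 + Rabs s2) _ dphi_int) as HH.
        unfold scal in HH; simpl in HH; unfold mult in HH; simpl in HH.
        rewrite Rmult_1_r in HH. exact HH. }
    intros t0 _. simpl. rewrite !Rabs_Ropp, !Rabs_mult, (Rabs_pos_eq (dphi t0)) by apply dphi_nonneg.
    ring.
Qed.

Lemma good_translate a p p' L : good p p' L -> good (hmul a p) (hmul a p') L.
Proof.
  destruct a as [a1 a2 a3].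
  intros (g1 & g2 & g3 & d1 & d2 & Hd & H0 & H1 & Hp & Hq & HI).
  exists (fun t => a1 + g1 t), (fun t => a2 + g2 t),
    (fun t => a3 + g3 t + /2 * (a1 * g2 t - a2 * g1 t)), d1, d2.
  split; [|split; [|split; [|split; [|split]]]].
  - intros t. destruct (Hd t) as (D1 & D2 & C1 & C2 & D3).
    split; [|split; [|split; [|split]]]; auto.
    + eapply is_derive_eq. apply @is_derive_plus. apply is_derive_cst. exact D1.
      unfold plus; simpl. ring.
    + eapply is_derive_eq. apply @is_derive_plus. apply is_derive_cst. exact D2.
      unfold plus; simpl. ring.
    + eapply is_derive_eq. apply @is_derive_plus. apply @is_derive_plus.
      apply is_derive_cst. exact D3. apply @is_derive_scal.
      apply @is_derive_minus. apply @is_derive_scal. exact D2. apply @is_derive_scal. exact D1.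
      unfold plus, minus, opp, scal; simpl. unfold mult, plus, opp; simpl. ring.
  - intros t Ht. destruct (H0 t Ht) as (E1 & E2 & E3 & E4 & E5).
    rewrite E1, E2, E3, E4, E5. repeat split.
  - intros t Ht. destruct (H1 t Ht) as (E1 & E2 & E3 & E4 & E5).
    rewrite E1, E2, E3, E4, E5. repeat split.
  - rewrite <- Hp. unfold hmul; simpl. f_equal.
  - rewrite <- Hq. unfold hmul; simpl. f_equal.
  - exact HI.
Qed.

Lemma lin_deriv u v t : is_derive (fun t => u*t+v) t u.
Proof.
  eapply is_derive_eq. apply @is_derive_plus. apply @is_derive_scal. apply is_derive_id.
  apply is_derive_cst. unfold plus, scal, one; simpl. unfold mult; simpl. ring.
Qed.

Lemma deriv_lin (f : R -> R) df u v t :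
  is_derive f (u*t+v) df -> is_derive (fun t => f (u*t+v)) t (u * df).
Proof.
  intros Hf. eapply is_derive_eq.
  apply (is_derive_comp f (fun t => u*t+v)). exact Hf. apply lin_deriv.
  unfold scal; simpl. unfold mult; simpl. ring.
Qed.

Lemma cont_lin (f : R -> R) u v t :
  continuous f (u*t+v) -> continuous (fun t => f (u*t+v)) t.
Proof.
  intros Hf. apply (continuous_comp (fun t => u*t+v) f). 2: exact Hf.
  apply @ex_derive_continuous. eexists. apply lin_deriv.
Qed.

Lemma good_concat p p' p'' L1 L2 : good p p' L1 -> good p' p'' L2 -> good p p'' (L1 + L2).
Proof.
  intros (f1 & f2 & f3 & e1 & e2 & Fd & F0 & F1 & Fp & Fq & FI).
  intros (h1 & h2 & h3 & k1 & k2 & Gd & G0 & G1 & Gp & Gq & GI).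
  rewrite <- Fq in Gp. injection Gp as E1 E2 E3.
  exists (fun t => f1 (2*t+0) + h1 (2*t + -1) - h1 0),
         (fun t => f2 (2*t+0) + h2 (2*t + -1) - h2 0),
         (fun t => f3 (2*t+0) + h3 (2*t + -1) - h3 0),
         (fun t => 2 * e1 (2*t+0) + 2 * k1 (2*t + -1)),
         (fun t => 2 * e2 (2*t+0) + 2 * k2 (2*t + -1)).
  split; [|split; [|split; [|split; [|split]]]].
  - intros t.
    destruct (Fd (2*t+0)) as (FD1 & FD2 & FC1 & FC2 & FD3).
    destruct (Gd (2*t + -1)) as (GD1 & GD2 & GC1 & GC2 & GD3).
    split; [|split; [|split; [|split]]].
    + eapply is_derive_eq. apply @is_derive_minus. apply @is_derive_plus.
      apply deriv_lin; exact FD1. apply deriv_lin; exact GD1. apply is_derive_cst.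
      unfold minus, plus, opp; simpl. ring.
    + eapply is_derive_eq. apply @is_derive_minus. apply @is_derive_plus.
      apply deriv_lin; exact FD2. apply deriv_lin; exact GD2. apply is_derive_cst.
      unfold minus, plus, opp; simpl. ring.
    + apply @continuous_plus; apply @continuous_scal_r; apply cont_lin; assumption.
    + apply @continuous_plus; apply @continuous_scal_r; apply cont_lin; assumption.
    + eapply is_derive_eq. apply @is_derive_minus. apply @is_derive_plus.
      apply deriv_lin; exact FD3. apply deriv_lin; exact GD3. apply is_derive_cst.
      unfold minus, plus, opp; simpl.
      destruct (Rle_dec t (/2)) as [Ht|Ht].
      * destruct (G0 (2*t + -1)) as (K1 & K2 & H1e & H2e & H3e); [lra|].
        rewrite K1, K2, H1e, H2e. ring.
      * destruct (F1 (2*t + 0)) as (K1 & K2 & H1e & H2e & H3e); [lra|].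
        rewrite K1, K2, H1e, H2e, E1, E2. ring.
  - intros t Ht.
    destruct (F0 (2*t+0)) as (K1 & K2 & H1e & H2e & H3e); [lra|].
    destruct (G0 (2*t + -1)) as (L1' & L2' & J1 & J2 & J3); [lra|].
    destruct (G0 (2*0 + -1)) as (_ & _ & J1' & J2' & J3'); [lra|].
    rewrite K1, K2, L1', L2', H1e, H2e, H3e, J1, J2, J3.
    replace (2*0+0) with 0 by ring. rewrite J1', J2', J3'.
    repeat split; ring.
  - intros t Ht.
    destruct (F1 (2*t+0)) as (K1 & K2 & H1e & H2e & H3e); [lra|].
    destruct (G1 (2*t + -1)) as (L1' & L2' & J1 & J2 & J3); [lra|].
    destruct (F1 (2*1 + 0)) as (_ & _ & J1' & J2' & J3'); [lra|].
    rewrite K1, K2, L1', L2', H1e, H2e, H3e, J1, J2, J3.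
    replace (2*1 + -1) with 1 by ring. rewrite J1', J2', J3'.
    repeat split; ring.
  - rewrite <- Fp.
    destruct (G0 (2*0 + -1)) as (_ & _ & J1 & J2 & J3); [lra|].
    rewrite J1, J2, J3. replace (2*0+0) with 0 by ring. f_equal; ring.
  - rewrite <- Gq.
    destruct (F1 (2*1 + 0)) as (_ & _ & J1 & J2 & J3); [lra|].
    rewrite J1, J2, J3, E1, E2, E3. replace (2*1 + -1) with 1 by ring. f_equal; ring.
  - match goal with |- is_RInt ?F _ _ _ => apply (is_RInt_Chasles (V := R_NormedModule) F 0 (/2) 1 L1 L2) end.
    + eapply is_RInt_ext.
      2:{ apply (is_RInt_comp_lin (V := R_NormedModule) (fun t => Rabs (e1 t) + Rabs (e2 t)) 2 0 0 (/2)).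
          replace (2*0+0) with 0 by ring. replace (2*/2+0) with 1 by field. exact FI. }
      intros x Hx. rewrite Rmin_left, Rmax_right in Hx by lra.
      destruct (G0 (2*x + -1)) as (K1 & K2 & _); [lra|].
      rewrite K1, K2. unfold scal; simpl; unfold mult; simpl.
      rewrite !Rmult_0_r, !Rplus_0_r, !Rabs_mult, (Rabs_pos_eq 2) by lra. ring.
    + eapply is_RInt_ext.
      2:{ apply (is_RInt_comp_lin (V := R_NormedModule) (fun t => Rabs (k1 t) + Rabs (k2 t)) 2 (-1) (/2) 1).
          replace (2*/2 + -1) with 0 by field. replace (2*1 + -1) with 1 by ring. exact GI. }
      intros x Hx. rewrite Rmin_left, Rmax_right in Hx by lra.
      destruct (F1 (2*x + 0)) as (K1 & K2 & _); [lra|].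
      rewrite K1, K2. unfold scal; simpl; unfold mult; simpl.
      rewrite !Rmult_0_r, !Rplus_0_l, !Rabs_mult, (Rabs_pos_eq 2) by lra. ring.
Qed.

Lemma hmul_hid_r p : hmul p hid = p.
Proof. destruct p; unfold hmul, hid; simpl; f_equal; ring. Qed.

Lemma good_L_eq p q L L' : good p q L -> L = L' -> good p q L'.
Proof. intros H ->; exact H. Qed.

Lemma std_seg s : std s -> good s hid 1.
Proof.
  intros Hs.
  destruct Hs as [Hs|[Hs|[Hs|Hs]]]; subst s; unfold e1, e2;
    match goal with |- good (mkH ?a ?b 0) _ _ =>
      apply (good_L_eq _ _ _ _ (good_seg a b));
      unfold Rabs; repeat destruct Rcase_abs; lra end.
Qed.

Lemma word_good w : List.Forall std w -> good (word_prod w) hid (INR (length w)).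
Proof.
  induction 1 as [|s w Hs Hw IH].
  - simpl. apply good_const.
  - simpl length. rewrite S_INR. simpl word_prod.
    apply good_concat with (p' := s).
    + rewrite <- (hmul_hid_r s) at 2. apply good_translate. exact IH.
    + apply std_seg; exact Hs.
Qed.

Lemma word_dCC w : List.Forall std w -> Rbar_le (dCC (word_prod w) hid) (INR (length w)).
Proof.
  intros Hw. unfold dCC. destruct (Glb_Rbar_correct (cc_length (word_prod w) hid)) as [Hlb _].
  apply Hlb. apply good_cc. apply word_good. exact Hw.
Qed.

Lemma exI (f : R -> R) a b : 0 <= a -> a <= b -> b <= 1 ->
  (forall t, 0 <= t <= 1 -> continuous f t) -> ex_RInt f a b.
Proof.
  intros. apply (ex_RInt_continuous (V := R_CompleteNormedModule)).
  intros z Hz. rewrite Rmin_left, Rmax_right in Hz by lra. apply H2; lra.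
Qed.

Lemma ftc (f df : R -> R) a b : 0 <= a -> a <= b -> b <= 1 ->
  (forall t, 0 <= t <= 1 -> is_derive f t (df t)) ->
  (forall t, 0 <= t <= 1 -> continuous df t) -> RInt df a b = f b - f a.
Proof.
  intros. apply is_RInt_unique.
  apply (is_RInt_derive (V := R_CompleteNormedModule) f df a b).
  - intros z Hz. rewrite Rmin_left, Rmax_right in Hz by lra. apply H2; lra.
  - intros z Hz. rewrite Rmin_left, Rmax_right in Hz by lra. apply H3; lra.
Qed.

Lemma RInt_plusR (f g : R -> R) a b : ex_RInt f a b -> ex_RInt g a b ->
  RInt (fun t => f t + g t) a b = RInt f a b + RInt g a b.
Proof. intros. apply (RInt_plus (V := R_CompleteNormedModule)); auto. Qed.

Lemma RInt_minusR (f g : R -> R) a b : ex_RInt f a b -> ex_RInt g a b ->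
  RInt (fun t => f t - g t) a b = RInt f a b - RInt g a b.
Proof. intros. apply (RInt_minus (V := R_CompleteNormedModule)); auto. Qed.

Lemma RInt_scalR (f : R -> R) a b l : ex_RInt f a b ->
  RInt (fun t => l * f t) a b = l * RInt f a b.
Proof. intros. apply (RInt_scal (V := R_CompleteNormedModule)); auto. Qed.

Lemma RInt_ChaslesR (f : R -> R) a b c : ex_RInt f a b -> ex_RInt f b c ->
  RInt f a b + RInt f b c = RInt f a c.
Proof. intros. apply (RInt_Chasles (V := R_CompleteNormedModule)); auto. Qed.

Lemma RInt_extR (f g : R -> R) a b : (forall x, Rmin a b < x < Rmax a b -> f x = g x) ->
  RInt f a b = RInt g a b.
Proof. intros. apply (RInt_ext (V := R_CompleteNormedModule)); auto. Qed.

Lemma contM (f g : R -> R) t : continuous f t -> continuous g t -> continuous (fun s => f s * g s) t.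
Proof. intros. apply (continuous_mult (K := R_AbsRing)); auto. Qed.
Lemma contP (f g : R -> R) t : continuous f t -> continuous g t -> continuous (fun s => f s + g s) t.
Proof. intros. apply (continuous_plus (V := R_NormedModule)); auto. Qed.
Lemma contMi (f g : R -> R) t : continuous f t -> continuous g t -> continuous (fun s => f s - g s) t.
Proof. intros. apply (continuous_minus (V := R_NormedModule)); auto. Qed.
Lemma contC (c t : R) : continuous (fun _ : R => c) t.
Proof. apply continuous_const. Qed.
Lemma contA (f : R -> R) t : continuous f t -> continuous (fun s => Rabs (f s)) t.
Proof. intros. apply continuous_Rabs_comp; auto. Qed.
Lemma contD (f : R -> R) (df : R) t : is_derive f t df -> continuous f t.
Proof. intros. apply (ex_derive_continuous (V := R_NormedModule)). exists df. auto. Qed.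

Lemma curve_bound g1 g2 g3 d1 d2 x y z :
  admissible g1 g2 g3 d1 d2 -> g1 0 = x -> g2 0 = y -> g3 0 = z ->
  g1 1 = 0 -> g2 1 = 0 -> g3 1 = 0 ->
  exists Lx Ly, RInt (fun t => Rabs (d1 t) + Rabs (d2 t)) 0 1 = Lx + Ly /\
    Rabs x <= Lx /\ Rabs y <= Ly /\
    4 * (z + Rabs x * Rabs y / 2) <= (Lx + Rabs x) * (Ly + Rabs y).
Proof.
  intros Had Hx Hy Hz Hx1 Hy1 Hz1.
  assert (D1 : forall t, 0 <= t <= 1 -> is_derive g1 t (d1 t)) by (intros; apply Had; auto).
  assert (D2 : forall t, 0 <= t <= 1 -> is_derive g2 t (d2 t)) by (intros; apply Had; auto).
  assert (C1 : forall t, 0 <= t <= 1 -> continuous d1 t) by (intros; apply Had; auto).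
  assert (C2 : forall t, 0 <= t <= 1 -> continuous d2 t) by (intros; apply Had; auto).
  assert (D3 : forall t, 0 <= t <= 1 -> is_derive g3 t (/2 * (g1 t * d2 t - g2 t * d1 t)))
    by (intros; apply Had; auto).
  assert (G1 : forall t, 0 <= t <= 1 -> continuous g1 t) by (intros; eapply contD; apply D1; auto).
  assert (G2 : forall t, 0 <= t <= 1 -> continuous g2 t) by (intros; eapply contD; apply D2; auto).
  set (Lx := RInt (fun t => Rabs (d1 t)) 0 1).
  set (Ly := RInt (fun t => Rabs (d2 t)) 0 1).
  assert (EA1 : forall a b, 0 <= a -> a <= b -> b <= 1 -> ex_RInt (fun t => Rabs (d1 t)) a b)
    by (intros; apply exI; auto; intros; apply contA; auto).
  assert (EA2 : forall a b, 0 <= a -> a <= b -> b <= 1 -> ex_RInt (fun t => Rabs (d2 t)) a b)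
    by (intros; apply exI; auto; intros; apply contA; auto).
  assert (VAR1 : forall a b, 0 <= a -> a <= b -> b <= 1 ->
     Rabs (g1 b - g1 a) <= RInt (fun t => Rabs (d1 t)) a b).
  { intros a b Ha Hab Hb. rewrite <- (ftc g1 d1 a b) by auto.
    apply abs_RInt_le; auto. apply exI; auto. }
  assert (VAR2 : forall a b, 0 <= a -> a <= b -> b <= 1 ->
     Rabs (g2 b - g2 a) <= RInt (fun t => Rabs (d2 t)) a b).
  { intros a b Ha Hab Hb. rewrite <- (ftc g2 d2 a b) by auto.
    apply abs_RInt_le; auto. apply exI; auto. }
  assert (CP : forall c, 0 <= c <= 1 -> continuity_pt g1 c).
  { intros. apply continuity_pt_filterlim. apply G1; auto. }
  destruct (continuity_ab_maj g1 0 1 ltac:(lra) CP) as [tM [HM HtM]].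
  destruct (continuity_ab_min g1 0 1 ltac:(lra) CP) as [tm [Hm Htm]].
  set (M := g1 tM). set (m := g1 tm).
  assert (Mx : x <= M) by (rewrite <- Hx; apply HM; lra).
  assert (M0 : 0 <= M) by (rewrite <- Hx1; apply HM; lra).
  assert (mx : m <= x) by (rewrite <- Hx; apply Hm; lra).
  assert (m0 : m <= 0) by (rewrite <- Hx1; apply Hm; lra).
  assert (HLx : 2 * (M - m) - Rabs x <= Lx).
  { destruct (Rle_dec tM tm) as [Ho|Ho].
    - pose proof (VAR1 0 tM ltac:(lra) ltac:(lra) ltac:(lra)).
      pose proof (VAR1 tM tm ltac:(lra) ltac:(lra) ltac:(lra)).
      pose proof (VAR1 tm 1 ltac:(lra) ltac:(lra) ltac:(lra)).
      assert (Lx = RInt (fun t => Rabs (d1 t)) 0 tM + RInt (fun t => Rabs (d1 t)) tM tm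
                   + RInt (fun t => Rabs (d1 t)) tm 1).
      { unfold Lx. rewrite RInt_ChaslesR, RInt_ChaslesR; auto; try apply EA1; try lra. }
      unfold M, m in *. rewrite Hx, Hx1 in *.
      revert H H0 H1 H2. unfold Rabs; repeat destruct Rcase_abs; intros; lra.
    - pose proof (VAR1 0 tm ltac:(lra) ltac:(lra) ltac:(lra)).
      pose proof (VAR1 tm tM ltac:(lra) ltac:(lra) ltac:(lra)).
      pose proof (VAR1 tM 1 ltac:(lra) ltac:(lra) ltac:(lra)).
      assert (Lx = RInt (fun t => Rabs (d1 t)) 0 tm + RInt (fun t => Rabs (d1 t)) tm tM
                   + RInt (fun t => Rabs (d1 t)) tM 1).
      { unfold Lx. rewrite RInt_ChaslesR, RInt_ChaslesR; auto; try apply EA1; try lra. }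
      unfold M, m in *. rewrite Hx, Hx1 in *.
      revert H H0 H1 H2. unfold Rabs; repeat destruct Rcase_abs; intros; lra. }
  assert (HLy : Rabs y <= Ly).
  { pose proof (VAR2 0 1 ltac:(lra) ltac:(lra) ltac:(lra)). rewrite Hy, Hy1 in H.
    unfold Ly. replace (Rabs y) with (Rabs (0 - y)); auto.
    rewrite Rminus_0_l, Rabs_Ropp; auto. }
  assert (EX : forall f : R -> R, (forall t, 0 <= t <= 1 -> continuous f t) -> ex_RInt f 0 1).
  { intros. apply exI; auto; lra. }
  set (A := RInt (fun t => g1 t * d2 t) 0 1).
  set (B := RInt (fun t => g2 t * d1 t) 0 1).
  assert (EAx : ex_RInt (fun t => g1 t * d2 t) 0 1) by (apply EX; intros; apply contM; auto).
  assert (EBx : ex_RInt (fun t => g2 t * d1 t) 0 1) by (apply EX; intros; apply contM; auto).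
  assert (AB1 : B + A = - (x * y)).
  { rewrite <- Hx, <- Hy.
    transitivity (g1 1 * g2 1 - g1 0 * g2 0); [| rewrite Hx1, Hy1; ring].
    rewrite <- (ftc (fun t => g1 t * g2 t) (fun t => d1 t * g2 t + g1 t * d2 t)); try lra.
    - unfold A, B. rewrite RInt_plusR.
      + rewrite (RInt_extR (fun t => d1 t * g2 t) (fun t => g2 t * d1 t)) by (intros; ring).
        reflexivity.
      + apply EX; intros; apply contM; auto.
      + auto.
    - intros t Ht. eapply is_derive_eq.
      apply (is_derive_mult (K := R_AbsRing) g1 g2); auto. intros; apply Rmult_comm.
      unfold plus, mult; simpl. ring.
    - intros t Ht. apply contP; apply contM; auto. }
  assert (AB2 : /2 * (A - B) = - z).
  { rewrite <- Hz. transitivity (g3 1 - g3 0); [| rewrite Hz1; ring].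
    rewrite <- (ftc g3 (fun t => /2 * (g1 t * d2 t - g2 t * d1 t))); try lra; auto.
    - unfold A, B. rewrite RInt_scalR, RInt_minusR; auto.
      apply EX. intros; apply contMi; apply contM; auto.
    - intros. apply contM. apply contC. apply contMi; apply contM; auto. }
  set (c := (g1 tM + g1 tm) / 2).
  assert (Id2 : RInt d2 0 1 = - y).
  { rewrite (ftc g2 d2 0 1); auto; lra. }
  assert (Ed2 : ex_RInt d2 0 1) by (apply EX; auto).
  assert (Ac : RInt (fun t => (g1 t - c) * d2 t) 0 1 = A + c * y).
  { transitivity (RInt (fun t => g1 t * d2 t - c * d2 t) 0 1).
    apply RInt_extR; intros; ring.
    rewrite RInt_minusR, RInt_scalR, Id2; auto. unfold A. apply (fun r => (ltac:(intros; ring) : forall r : R, r - c * - y = r + c * y) r).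
    apply EX. intros. apply contM; auto. apply contC. }
  assert (Bd : - (A + c * y) <= (g1 tM - g1 tm) / 2 * Ly).
  { rewrite <- Ac. eapply Rle_trans. apply Rle_abs. rewrite Rabs_Ropp.
    eapply Rle_trans. apply abs_RInt_le. lra.
    apply EX. intros. apply contM; auto. apply contMi; auto. apply contC.
    unfold Ly. rewrite <- RInt_scalR by (apply EA2; lra).
    apply RInt_le. lra.
    apply EX. intros. apply contA. apply contM; auto. apply contMi; auto. apply contC.
    apply EX. intros. apply contM. apply contC. apply contA; auto.
    intros t Ht. rewrite Rabs_mult. apply Rmult_le_compat_r. apply Rabs_pos.
    assert (g1 t <= g1 tM) by (apply HM; lra). assert (g1 tm <= g1 t) by (apply Hm; lra).
    unfold c. unfold Rabs; destruct Rcase_abs; lra. }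
  exists Lx, Ly. split; [|split; [|split]].
  - unfold Lx, Ly. apply RInt_plusR; apply EX; intros; apply contA; auto.
  - clear -HLx Mx mx M0 m0. destruct (Rle_dec 0 x); [rewrite Rabs_pos_eq in * by lra | rewrite Rabs_left in * by lra]; lra.
  - exact HLy.
  - unfold M, m in *.
    assert (Hcy : y * (c - x / 2) <= Rabs y * ((g1 tM - g1 tm) - Rabs x) / 2).
    { unfold c. unfold Rabs; repeat destruct Rcase_abs; nra. }
    assert (HW : 0 <= g1 tM - g1 tm) by lra.
    assert (z + Rabs x * Rabs y / 2 <= (g1 tM - g1 tm) / 2 * (Ly + Rabs y)).
    { assert (Rabs x * Rabs y = Rabs x * Rabs y) by reflexivity.
      assert (A = - z - x * y / 2) by lra.
      assert (Rabs y * ((g1 tM - g1 tm) - Rabs x) / 2 + Rabs x * Rabs y / 2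
              = (g1 tM - g1 tm) / 2 * Rabs y) by field.
      nra. }
    assert (0 <= Ly + Rabs y) by (pose proof (Rabs_pos y); lra).
    nra.
Qed.

Lemma int_lt_succ (P X : Z) : IZR P < IZR X + 1 -> (P <= X)%Z.
Proof. intros H. rewrite <- (plus_IZR X 1) in H. apply lt_IZR in H. lia. Qed.

Lemma gt_m1 (P X : Z) : (P > X)%Z -> IZR X <= IZR P - 1.
Proof. intros H. assert (X + 1 <= P)%Z by lia. apply IZR_le in H0. rewrite plus_IZR in H0. lra. Qed.

Lemma interp_bound (S k U : R) :
  S * S = S * S ->
  U * (S - U) = (k + 1 - U) * (k * (S - k)) + (U - k) * ((k+1) * (S - (k+1))) + (U - k) * (k + 1 - U).
Proof. intros _. ring. Qed.

Lemma choose_W (a b S P : Z) (U V d : R) :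
  0 < d -> d * (Rabs (IZR S) + 2) <= /2 ->
  IZR a <= U -> IZR b <= V -> (0 <= a)%Z -> (0 <= b)%Z ->
  U + V < IZR S + d -> IZR P <= U * V ->
  exists W : Z, (a <= W)%Z /\ (W <= S - b)%Z /\ (P <= W * (S - W))%Z.
Proof.
  intros Hd Hd2 HaU HbV Ha Hb HUV HP.
  apply IZR_le in Ha. apply IZR_le in Hb.
  assert (HSabs : IZR S <= Rabs (IZR S)) by apply Rle_abs.
  assert (HdS : d * Rabs (IZR S) <= /2 - 2 * d) by lra.
  assert (HU0 : 0 <= U) by lra.
  assert (HV0 : 0 <= V) by lra.
  destruct (Rle_dec U (IZR (S - b))) as [HU|HU].
  - destruct (archimed U) as [Hup1 Hup2].
    set (k := (up U - 1)%Z).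
    assert (Hk1 : IZR k <= U) by (unfold k; rewrite minus_IZR; lra).
    assert (Hk2 : U < IZR k + 1) by (unfold k; rewrite minus_IZR; lra).
    assert (Hak : (a <= k)%Z).
    { apply int_lt_succ. lra. }
    assert (HkS : (k <= S - b)%Z) by (apply le_IZR; lra).
    assert (HPU : IZR P <= U * (IZR S - U) + d * U).
    { assert (V <= IZR S + d - U) by lra. nra. }
    assert (HdU : d * U <= /2).
    { assert (U <= Rabs (IZR S) + 1) by (rewrite minus_IZR in HU; lra). nra. }
    destruct (Z_le_gt_dec P (k * (S - k))) as [Hf|Hf].
    + exists k. repeat split; lia.
    + assert (HkS' : (k < S - b)%Z).
      { destruct (Z.eq_dec k (S - b)) as [E|E]; [|lia].
        exfalso. assert (IZR k = IZR (S - b)) by (f_equal; exact E). assert (U = IZR k) by lra.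
        pose proof (gt_m1 _ _ Hf) as H1.
        rewrite mult_IZR, minus_IZR in H1. rewrite H0 in HPU. nra. }
      exists (k + 1)%Z. repeat split; try lia.
      destruct (Z_le_gt_dec P ((k+1) * (S - (k+1)))) as [Hf'|Hf']; auto.
      exfalso.
      pose proof (gt_m1 _ _ Hf) as E1. pose proof (gt_m1 _ _ Hf') as E2.
      rewrite !mult_IZR, !minus_IZR, !plus_IZR in *.
      pose proof (interp_bound (IZR S) (IZR k) U eq_refl) as HI.
      assert (0 <= IZR k + 1 - U) by lra. assert (0 <= U - IZR k) by lra.
      assert ((U - IZR k) * (IZR k + 1 - U) <= /4) by nra.
      nra.
  - exists (S - b)%Z.
    rewrite minus_IZR in HU.
    assert (HaS : (a <= S - b)%Z).
    { apply int_lt_succ. rewrite minus_IZR. assert (d < 1).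
      { assert (0 <= d * Rabs (IZR S)) by (apply Rmult_le_pos; [lra | apply Rabs_pos]). lra. }
      lra. }
    repeat split; try lia.
    apply int_lt_succ.
    replace (S - (S - b))%Z with b by ring.
    rewrite mult_IZR, minus_IZR.
    assert (HU2 : U <= IZR S - IZR b + d) by lra.
    assert (HV2 : V <= IZR b + d) by lra.
    assert (U * V <= (IZR S - IZR b + d) * (IZR b + d)).
    { apply Rmult_le_compat; lra. }
    assert (d * d <= d * /2).
    { apply Rmult_le_compat_l; [lra|].
      assert (0 <= d * Rabs (IZR S)) by (apply Rmult_le_pos; [lra | apply Rabs_pos]). lra. }
    assert (d * IZR S <= d * Rabs (IZR S)) by (apply Rmult_le_compat_l; lra).
    assert ((IZR S - IZR b + d) * (IZR b + d) = (IZR S - IZR b) * IZR b + d * IZR S + d * d) by ring.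
    lra.
Qed.

Lemma hmul_assoc p q r : hmul p (hmul q r) = hmul (hmul p q) r.
Proof. destruct p, q, r; unfold hmul; simpl; f_equal; ring. Qed.

Lemma hmul_hid_l p : hmul hid p = p.
Proof. destruct p; unfold hmul, hid; simpl; f_equal; ring. Qed.

Lemma word_prod_app l1 l2 : word_prod (l1 ++ l2) = hmul (word_prod l1) (word_prod l2).
Proof.
  induction l1 as [|s l IH]; simpl.
  - rewrite hmul_hid_l; auto.
  - rewrite IH, hmul_assoc; auto.
Qed.


Definition rep (s : H) (n : Z) := repeat s (Z.to_nat n).

Lemma rep_prod p q n : (0 <= n)%Z -> word_prod (rep (mkH p q 0) n) = mkH (IZR n * p) (IZR n * q) 0.
Proof.
  intros Hn. unfold rep. rewrite <- (Z2Nat.id n) at 2 3 by auto.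
  rewrite <- INR_IZR_INZ. generalize (Z.to_nat n) as m. clear.
  induction m as [|m IH].
  - simpl. unfold hid. f_equal; ring.
  - simpl repeat. simpl word_prod. rewrite IH. rewrite S_INR. unfold hmul; simpl. f_equal; ring.
Qed.

Lemma rep_len s n : (0 <= n)%Z -> Z.of_nat (length (rep s n)) = n.
Proof. intros. unfold rep. rewrite repeat_length. lia. Qed.

Lemma rep_std s n : std s -> List.Forall std (rep s n).
Proof. intros. unfold rep. apply Forall_forall. intros x Hx. apply repeat_spec in Hx. subst; auto. Qed.

Definition e1i := mkH (-1) 0 0.
Definition e2i := mkH 0 (-1) 0.
Lemma std_e1 : std e1. Proof. left; auto. Qed.
Lemma std_e1i : std e1i. Proof. right; left; auto. Qed.
Lemma std_e2 : std e2. Proof. right; right; left; auto. Qed.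
Lemma std_e2i : std e2i. Proof. right; right; right; auto. Qed.

Lemma split_r (W H r : Z) : (1 <= W)%Z -> (0 <= H)%Z -> (0 <= r <= W * H)%Z ->
  exists j t, (0 <= j <= W - 1)%Z /\ (0 <= t <= H)%Z /\ r = (t + (W - 1 - j) * H)%Z.
Proof.
  intros HW HH Hr.
  destruct (Z.eq_dec H 0) as [E|E].
  - subst H. exists (W - 1)%Z, 0%Z. lia.
  - set (q := Z.min (r / H) (W - 1)).
    assert (Hd := Z.mul_div_le r H ltac:(lia)).
    assert (Hm := Z.mod_pos_bound r H ltac:(lia)).
    assert (Hdm := Z.div_mod r H ltac:(lia)).
    assert (0 <= r / H)%Z by (apply Z.div_pos; lia).
    exists (W - 1 - q)%Z, (r - q * H)%Z.
    destruct (Z.le_ge_cases (r / H) (W - 1)) as [C|C].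
    + unfold q. rewrite Z.min_l by lia. nia.
    + unfold q. rewrite Z.min_r by lia. nia.
Qed.

Lemma base_word (a b W H P : Z) : (0 <= a)%Z -> (0 <= b)%Z -> (a <= W)%Z -> (b <= H)%Z ->
  (0 <= P)%Z -> (P <= W * H)%Z ->
  exists w, List.Forall std w /\ word_prod w = mkH (IZR a) (IZR b) (IZR P - IZR a * IZR b / 2) /\
    Z.of_nat (length w) = (2 * W + 2 * H - a - b)%Z.
Proof.
  intros Ha Hb HaW HbH HP HPW.
  destruct (Z.eq_dec W 0) as [EW|EW].
  - subst W. assert (a = 0)%Z by lia. assert (P = 0)%Z by lia. subst a P.
    exists (rep e2i (H - b) ++ rep e2 H).
    split; [|split].
    + apply Forall_app; split; apply rep_std; [apply std_e2i | apply std_e2].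
    + rewrite word_prod_app. unfold e2i, e2. rewrite !rep_prod by lia.
      unfold hmul; simpl. rewrite minus_IZR. f_equal; field.
    + rewrite length_app, Nat2Z.inj_add, !rep_len by lia. lia.
  - destruct (split_r W H (W * H - P) ltac:(lia) ltac:(lia) ltac:(nia)) as (j & t & Hj & Ht & Hr).
    exists (rep e2i (H - b) ++ rep e1 j ++ rep e2 t ++ (e1 :: nil) ++ rep e2 (H - t)
            ++ rep e1 (W - j - 1) ++ rep e1i (W - a)).
    split; [|split].
    + repeat (apply Forall_app; split); try apply rep_std;
        auto using std_e1, std_e1i, std_e2, std_e2i.
    + rewrite !word_prod_app. unfold e2i, e1, e2, e1i. rewrite !rep_prod by lia.
      simpl (word_prod (_ :: nil)). rewrite hmul_hid_r.
      assert (HrR : IZR W * IZR H - IZR P = IZR t + (IZR W - 1 - IZR j) * IZR H).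
      { rewrite <- mult_IZR, <- minus_IZR, Hr. rewrite plus_IZR, mult_IZR, !minus_IZR. reflexivity. }
      unfold hmul; simpl. rewrite !minus_IZR. f_equal; try field.
      assert (IZR P = IZR W * IZR H - IZR t - (IZR W - 1 - IZR j) * IZR H) by lra.
      rewrite H0. field.
    + rewrite !length_app. simpl length. rewrite !Nat2Z.inj_add, !rep_len by lia. change (Z.of_nat 1) with 1%Z. lia.
Qed.

Lemma odd_abs n : Z.odd (Z.abs n) = Z.odd n.
Proof. destruct (Z.abs_spec n) as [[_ ->]|[_ ->]]; auto. apply Z.odd_opp. Qed.

Lemma P_int x y z : (exists k : Z, z = IZR k + eps x y) ->
  exists P : Z, IZR P = z + IZR (Z.abs x) * IZR (Z.abs y) / 2.
Proof.
  intros [k Hk]. set (N := Z.abs (x * y)).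
  assert (HN : N = (2 * Z.div2 N + Z.b2z (Z.odd N))%Z) by apply Z.div2_odd.
  assert (Ho : Z.odd N = (Z.odd x && Z.odd y)%bool) by (unfold N; rewrite odd_abs; apply Z.odd_mul).
  exists (k + Z.div2 N + Z.b2z (Z.odd N))%Z.
  replace (IZR (Z.abs x) * IZR (Z.abs y)) with (IZR N) by (unfold N; rewrite Z.abs_mul, mult_IZR; auto).
  pose proof (f_equal IZR HN) as HR. rewrite plus_IZR, mult_IZR in HR.
  rewrite HR. rewrite Hk. unfold eps. rewrite <- Ho.
  rewrite !plus_IZR.
  destruct (Z.odd N); simpl; field.
Qed.

Definition rot (g : H) := mkH (- hy g) (hx g) (hz g).

Lemma rot_hmul g h : rot (hmul g h) = hmul (rot g) (rot h).
Proof. destruct g, h; unfold rot, hmul; simpl; f_equal; ring. Qed.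

Lemma rot_std s : std s -> std (rot s).
Proof.
  unfold std, rot, e1, e2.
  intros [E|[E|[E|E]]]; subst s; simpl.
  - right; right; left. f_equal; ring.
  - right; right; right. f_equal; ring.
  - right; left. f_equal; ring.
  - left. f_equal; ring.
Qed.

Lemma rot_word w : word_prod (map rot w) = rot (word_prod w).
Proof.
  induction w as [|s w IH]; simpl.
  - unfold rot, hid; simpl; f_equal; ring.
  - rewrite IH, rot_hmul; auto.
Qed.

Lemma rot_word_ex g n : (exists w, List.Forall std w /\ word_prod w = g /\ Z.of_nat (length w) = n) ->
  (exists w, List.Forall std w /\ word_prod w = rot g /\ Z.of_nat (length w) = n).
Proof.
  intros (w & H1 & H2 & H3). exists (map rot w). split; [|split].
  - apply Forall_map. eapply Forall_impl; [|exact H1]. apply rot_std.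
  - rewrite rot_word, H2; auto.
  - rewrite length_map; auto.
Qed.

Lemma word_parity w : List.Forall std w -> exists X Y m : Z,
  hx (word_prod w) = IZR X /\ hy (word_prod w) = IZR Y /\ (Z.of_nat (length w) + X + Y = 2 * m)%Z.
Proof.
  induction 1 as [|s w Hs Hw IH].
  - exists 0%Z, 0%Z, 0%Z. simpl. auto.
  - destruct IH as (X & Y & m & HX & HY & Hm).
    simpl word_prod. simpl length. rewrite Nat2Z.inj_succ.
    unfold std, e1, e2 in Hs.
    destruct Hs as [E|[E|[E|E]]]; subst s; unfold hmul; cbn [hx hy hz]; rewrite HX, HY.
    + exists (X + 1)%Z, Y, (m + 1)%Z. rewrite plus_IZR. repeat split; try ring. lia.
    + exists (X - 1)%Z, Y, m. rewrite minus_IZR. repeat split; try ring. lia.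
    + exists X, (Y + 1)%Z, (m + 1)%Z. rewrite plus_IZR. repeat split; try ring. lia.
    + exists X, (Y - 1)%Z, m. rewrite minus_IZR. repeat split; try ring. lia.
Qed.

Lemma word_ex_eq g g' n : (exists w, List.Forall std w /\ word_prod w = g /\ Z.of_nat (length w) = n) ->
  g = g' -> (exists w, List.Forall std w /\ word_prod w = g' /\ Z.of_nat (length w) = n).
Proof. intros H ->; exact H. Qed.

Lemma word_ex_len g n n' : (exists w, List.Forall std w /\ word_prod w = g /\ Z.of_nat (length w) = n) ->
  n = n' -> (exists w, List.Forall std w /\ word_prod w = g /\ Z.of_nat (length w) = n').
Proof. intros H ->; exact H. Qed.

Theorem mainTheorem9 (x y : Z) (z : R) (n : Z) :
  0 <= z ->
  (exists k : Z, z = IZR k + eps x y) ->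
  Z.even (n - (x + y)) = true ->
  Rbar_lt (IZR n - 2) (dCC (mkH (IZR x) (IZR y) z) hid) ->
  Rbar_le (dCC (mkH (IZR x) (IZR y) z) hid) (IZR n) ->
  word_length_is (mkH (IZR x) (IZR y) z) n.
Proof.
  intros Hz0 Hk Hpar Hlt Hle.
  apply Z.even_spec in Hpar. destruct Hpar as [m' Hm'].
  split.
  2:{ intros w Hw Hwp.
    pose proof (word_dCC w Hw) as Hd. rewrite Hwp in Hd.
    assert (Hr : IZR n - 2 < INR (length w)).
    { pose proof (Rbar_lt_le_trans _ _ _ Hlt Hd) as HH. simpl in HH. exact HH. }
    rewrite INR_IZR_INZ in Hr.
    assert (n - 2 < Z.of_nat (length w))%Z.
    { apply lt_IZR. rewrite minus_IZR. exact Hr. }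
    destruct (word_parity w Hw) as (X & Y & m & HX & HY & Hm).
    rewrite Hwp in HX, HY. simpl in HX, HY. apply eq_IZR in HX. apply eq_IZR in HY. subst. lia. }
  set (a := Z.abs x). set (b := Z.abs y).
  destruct (P_int x y z Hk) as [P HP]. fold a b in HP.
  assert (HS : exists S, (n + a + b = 2 * S)%Z).
  { unfold a, b.
    destruct (Z.abs_spec x) as [[Hx' Ex]|[Hx' Ex]]; destruct (Z.abs_spec y) as [[Hy' Ey]|[Hy' Ey]];
      rewrite Ex, Ey; [exists (m' + x + y)%Z | exists (m' + x)%Z | exists (m' + y)%Z | exists m']; lia. }
  destruct HS as [S HS].
  assert (HSR : IZR n + IZR a + IZR b = 2 * IZR S).
  { rewrite <- !plus_IZR, <- mult_IZR. f_equal. exact HS. }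
  assert (Ha0 : (0 <= a)%Z) by (unfold a; lia).
  assert (Hb0 : (0 <= b)%Z) by (unfold b; lia).
  assert (Hax : IZR a = Rabs (IZR x)) by (unfold a; apply abs_IZR).
  assert (Hby : IZR b = Rabs (IZR y)) by (unfold b; apply abs_IZR).
  set (d := / (2 * (Rabs (IZR S) + 2))).
  assert (HSp : 0 < Rabs (IZR S) + 2) by (pose proof (Rabs_pos (IZR S)); lra).
  assert (Hd : 0 < d) by (unfold d; apply Rinv_0_lt_compat; lra).
  assert (Hd2 : d * (Rabs (IZR S) + 2) <= /2) by (unfold d; right; field; lra).
  destruct (classic (exists W, (a <= W)%Z /\ (W <= S - b)%Z /\ (P <= W * (S - W))%Z))
    as [[W (HW1 & HW2 & HW3)] | HnW].
  2:{ exfalso.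
    assert (Hlb : is_lb_Rbar (cc_length (mkH (IZR x) (IZR y) z) hid) (IZR n + 2 * d)).
    { intros L HL. destruct HL as (g1 & g2 & g3 & d1 & d2 & Had & H0 & H1 & HLe).
      injection H0 as E1 E2 E3. unfold hid in H1. injection H1 as F1 F2 F3.
      destruct (curve_bound g1 g2 g3 d1 d2 (IZR x) (IZR y) z Had E1 E2 E3 F1 F2 F3)
        as (Lx & Ly & HLL & Hx & Hy & H4).
      simpl. destruct (Rle_dec (IZR n + 2 * d) L) as [ok|nok]; auto. exfalso. apply HnW.
      apply (choose_W a b S P ((Lx + Rabs (IZR x)) / 2) ((Ly + Rabs (IZR y)) / 2) d); auto.
      - lra.
      - lra.
      - lra.
      - rewrite HP, Hax, Hby. nra. }
    destruct (Glb_Rbar_correct (cc_length (mkH (IZR x) (IZR y) z) hid)) as [_ Hglb].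
    specialize (Hglb _ Hlb). unfold dCC in Hle.
    pose proof (Rbar_le_trans _ _ _ Hglb Hle) as HH. simpl in HH. lra. }
  assert (HP0 : (0 <= P)%Z).
  { apply le_IZR. rewrite HP. assert (0 <= IZR a) by (apply IZR_le; lia).
    assert (0 <= IZR b) by (apply IZR_le; lia). nra. }
  assert (Hzz : z = IZR P - IZR a * IZR b / 2) by lra.
  assert (Hlen : (2 * W + 2 * (S - W) - a - b = n)%Z) by lia.
  assert (Hlen' : (2 * (S - W) + 2 * W - b - a = n)%Z) by lia.
  destruct (Z_le_gt_dec 0 x) as [Sx|Sx]; destruct (Z_le_gt_dec 0 y) as [Sy|Sy].
  - assert (a = x) by (unfold a; lia). assert (b = y) by (unfold b; lia).
    eapply word_ex_len; [eapply word_ex_eq; [apply (base_word a b W (S - W) P); lia|] | exact Hlen].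
    rewrite Hzz, H, H0. reflexivity.
  -
    assert (a = x) by (unfold a; lia). assert (b = (- y)%Z) by (unfold b; lia).
    eapply word_ex_len; [| exact Hlen'].
    eapply word_ex_eq. apply rot_word_ex. apply rot_word_ex. apply rot_word_ex.
    apply (base_word b a (S - W) W P); lia.
    unfold rot; simpl. rewrite Hzz. rewrite H, H0, opp_IZR. f_equal; field.
  -
    assert (a = (- x)%Z) by (unfold a; lia). assert (b = y) by (unfold b; lia).
    eapply word_ex_len; [| exact Hlen'].
    eapply word_ex_eq. apply rot_word_ex.
    apply (base_word b a (S - W) W P); lia.
    unfold rot; simpl. rewrite Hzz. rewrite H, H0, opp_IZR. f_equal; field.
  -
    assert (a = (- x)%Z) by (unfold a; lia). assert (b = (- y)%Z) by (unfold b; lia).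
    eapply word_ex_len; [| exact Hlen].
    eapply word_ex_eq. apply rot_word_ex. apply rot_word_ex.
    apply (base_word a b W (S - W) P); lia.
    unfold rot; simpl. rewrite Hzz. rewrite H, H0, !opp_IZR. f_equal; field.
Qed.
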